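(* Assume the standing hypotheses, let $\sigma\in(0,1)$ and $C_1>0$. Then there exist $\rho>0$, $\bar\mu\in(0,\hat\mu]$ and $C>0$ such that for all $\mu\in(0,\bar\mu]$ and all $(x,\lambda)\in\mathcal B((x^*,\lambda^* ),\delta)$ with $x>0,\lambda>0$, $\|(x,\lambda)-(x^\mu,\lambda^\mu)\|<\rho$ and $\|F_\mu(x,\lambda)\|\le C_1\mu$, the following is well defined and satisfies $$\|(\Delta x,\Delta\lambda)-(\Delta x^N,\Delta\lambda^N)\|\le C\mu^2,$$ where $(\Delta x^N,\Delta\lambda^N)$ is the Newton direction for $\mu^+=\sigma\mu$ and $(\Delta x,\Delta\lambda)$ is constructed as follows. For $i\in\mathcal A$, $\Delta x_i\in\{\Delta x_i^S,\Delta x_i^C\}$ (chosen arbitrarily per index). $\Delta x_{\mathcal I}=\Delta x_{\mathcal I}^{ls}$ is the solution of $$\big(H_{\mathcal I\mathcal I}+X_{\mathcal I\mathcal I}^{-1}\Lambda_{\mathcal I\mathcal I}\big)\Delta x^{ls}_{\mathcal I}=-\big(\nabla f(x)_{\mathcal I}+H_{\mathcal I\mathcal A}\Delta x_{\mathcal A}\big)+\mu^+X_{\mathcal I\mathcal I}^{-1}e .$$ For $i\in\mathcal I$, $\Delta\lambda_i\in\{\Delta\lambda_i^{ls},\Delta\lambda_i^C\}$ where $\Delta\lambda^{ls}_{\mathcal I}=-\lambda_{\mathcal I}+\mu^+X_{\mathcal I\mathcal I}^{-1}e-X_{\mathcal I\mathcal I}^{-1}\Lambda_{\mathcal I\mathcal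 I}\Delta x^{ls}_{\mathcal I}$. For $i\in\mathcal A$, $\Delta\lambda_i\in\{\Delta\lambda_i^{ls},\Delta\lambda_i^b\}$ where $$\Delta\lambda^b_{\mathcal A}=\nabla f(x)_{\mathcal A}-\lambda_{\mathcal A}+H_{\mathcal A\mathcal A}\Delta x_{\mathcal A}+H_{\mathcal A\mathcal I}\Delta x^{ls}_{\mathcal I},$$ $$\Delta\lambda^{ls}_{\mathcal A}=\big(I+X_{\mathcal A\mathcal A}^2\big)^{-1}\Big[\Delta\lambda^b_{\mathcal A}-X_{\mathcal A\mathcal A}\big(\Lambda_{\mathcal A\mathcal A}X_{\mathcal A\mathcal A}e-\mu^+e+\Lambda_{\mathcal A\mathcal A}\Delta x_{\mathcal A}\big)\Big]$$ (the least-squares solution of the overdetermined system $-\Delta\lambda_{\mathcal A}=-(\Delta\lambda^b_{\mathcal A})$, $X_{\mathcal A\mathcal A}\Delta\lambda_{\mathcal A}=-(\Lambda_{\mathcal A\mathcal A}X_{\mathcal A\mathcal A}e-\mu^+e+\Lambda_{\mathcal A\mathcal A}\Delta x_{\mathcal A})$).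
   Context: Problem: minimize $f(x)$ subject to $x\ge0$, $f:\mathbb R^n\to\mathbb R$ twice continuously differentiable with locally Lipschitz Hessian. Norms Euclidean; $e$ all-ones; $X=\mathrm{diag}(x)$, $\Lambda=\mathrm{diag}(\lambda)$; $H=\nabla^2 f(x)$; subscripts $\mathcal A,\mathcal I$ denote sub-vectors and sub-blocks (first subscript rows, second columns). $F_\mu(x,\lambda)=\begin{bmatrix}\nabla f(x)-\lambda\\ \Lambda Xe-\mu e\end{bmatrix}$, $F'(x,\lambda)=\begin{bmatrix}H&-I\\ \Lambda&X\end{bmatrix}$. The Newton direction for $\mu^+=\sigma\mu$ solves $F'(x,\lambda)(\Delta x^N,\Delta\lambda^N)=-F_{\mu^+}(x,\lambda)$. Partial approximations: $\Delta x_i^S=-\frac{x_i[\nabla f(x)]_i-\mu^+}{x_iH_{ii}+\lambda_i}$, $\Delta x_i^C=-x_i+\mu^+/\lambda_i$, $\Delta\lambda_i^C=-\lambda_i+\mu^+/x_i$. Standing hypotheses: $(x^*,\lambda^* )$ satisfies $\nabla f(x^* )=\lambda^*$, $x^*\ge0$, $\lambda^*\ge0$, $x_i^*\lambda_i^*=0$, $x^*+\lambda^*>0$, $[\nabla^2f(x^* )]_{\mathcal I\mathcal I}\succ0$, where $\mathcal A=\{i:x^*_i=0\}$, $\mathcal I=\{i:x_i^*>0\}$. $\delta>0$: $F'$ nonsingular on $\mathcal B((x^*,\lambda^* ),\delta)$ with $\|F'^{-1}\|\le M$; $\hat\mu>0$: for $\mu\in(0,\hat\mu]$ a Lipschitz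 barrier trajectory $(x^\mu,\lambda^\mu)\in\mathcal B((x^*,\lambda^* ),\delta)$ with $F_\mu(x^\mu,\lambda^\mu)=0$, $\|(x^\mu,\lambda^\mu)-(x^*,\lambda^* )\|\le C_4\mu$ exists. *)

(* Defs.v *)
From mathcomp Require Import all_boot all_order all_algebra.
From mathcomp Require Import all_classical all_reals all_analysis.
Set Implicit Arguments. Unset Strict Implicit. Unset Printing Implicit Defensive.
Import Order.TTheory GRing.Theory Num.Theory.
Local Open Scope ring_scope.

Definition enorm (R : realType) (m : nat) (v : 'cV[R]_m) : R :=
  Num.sqrt (\sum_(i < m) (v i 0) ^+ 2).

(* Active index set A = {i : x*_i = 0}; I is its complement. *)
Definition isA (R : realType) (n : nat) (xs : 'cV[R]_n) (i : 'I_n) : bool :=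
  xs i 0 == 0.

Definition Fmu (R : realType) (n : nat) (g : 'cV[R]_n -> 'cV[R]_n) (mu : R)
  (x l : 'cV[R]_n) : 'cV[R]_(n + n) :=
  col_mx (g x - l) (\col_i (l i 0 * x i 0 - mu)).

Definition Fprime (R : realType) (n : nat) (Hf : 'cV[R]_n -> 'M[R]_n)
  (x l : 'cV[R]_n) : 'M[R]_(n + n) :=
  block_mx (Hf x) (- 1%:M) (diag_mx l^T) (diag_mx x^T).

Definition newton_dir (R : realType) (n : nat) (g : 'cV[R]_n -> 'cV[R]_n)
  (Hf : 'cV[R]_n -> 'M[R]_n) (mup : R) (x l : 'cV[R]_n) : 'cV[R]_(n + n) :=
  invmx (Fprime Hf x l) *m (- Fmu g mup x l).

Definition dxS (R : realType) (n : nat) (g : 'cV[R]_n -> 'cV[R]_n)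
  (Hf : 'cV[R]_n -> 'M[R]_n) (mup : R) (x l : 'cV[R]_n) (i : 'I_n) : R :=
  - ((x i 0 * g x i 0 - mup) / (x i 0 * Hf x i i + l i 0)).
Definition dxC (R : realType) (n : nat) (mup : R) (x l : 'cV[R]_n) (i : 'I_n) : R :=
  - x i 0 + mup / l i 0.
Definition dlC (R : realType) (n : nat) (mup : R) (x l : 'cV[R]_n) (i : 'I_n) : R :=
  - l i 0 + mup / x i 0.

Definition dxA_of (R : realType) (n : nat) (xs : 'cV[R]_n) (g : 'cV[R]_n -> 'cV[R]_n)
  (Hf : 'cV[R]_n -> 'M[R]_n) (mup : R) (x l : 'cV[R]_n) (cx : 'I_n -> bool)
  : 'cV[R]_n :=
  \col_i (if isA xs i then (if cx i then dxS g Hf mup x l i else dxC mup x l i)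
          else 0).

Definition ls_sol (R : realType) (n : nat) (xs : 'cV[R]_n) (g : 'cV[R]_n -> 'cV[R]_n)
  (Hf : 'cV[R]_n -> 'M[R]_n) (mup : R) (x l dxA dxI : 'cV[R]_n) : Prop :=
  (forall i, isA xs i -> dxI i 0 = 0) /\
  (forall i, ~~ isA xs i ->
     (Hf x *m dxI) i 0 + l i 0 / x i 0 * dxI i 0
     = - (g x i 0 + (Hf x *m dxA) i 0) + mup / x i 0).

Definition dlb (R : realType) (n : nat) (g : 'cV[R]_n -> 'cV[R]_n)
  (Hf : 'cV[R]_n -> 'M[R]_n) (x l dxA dxI : 'cV[R]_n) (i : 'I_n) : R :=
  g x i 0 - l i 0 + (Hf x *m dxA) i 0 + (Hf x *m dxI) i 0.
Definition dlsI (R : realType) (n : nat) (mup : R) (x l dxI : 'cV[R]_n) (i : 'I_n) : R :=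
  - l i 0 + mup / x i 0 - l i 0 / x i 0 * dxI i 0.
Definition dlsA (R : realType) (n : nat) (g : 'cV[R]_n -> 'cV[R]_n)
  (Hf : 'cV[R]_n -> 'M[R]_n) (mup : R) (x l dxA dxI : 'cV[R]_n) (i : 'I_n) : R :=
  (1 + x i 0 ^+ 2)^-1 *
  (dlb g Hf x l dxA dxI i - x i 0 * (l i 0 * x i 0 - mup + l i 0 * dxA i 0)).

Definition dlam_of (R : realType) (n : nat) (xs : 'cV[R]_n) (g : 'cV[R]_n -> 'cV[R]_n)
  (Hf : 'cV[R]_n -> 'M[R]_n) (mup : R) (x l dxA dxI : 'cV[R]_n)
  (cl : 'I_n -> bool) : 'cV[R]_n :=
  \col_i (if isA xs i
          then (if cl i then dlsA g Hf mup x l dxA dxI i else dlb g Hf x l dxA dxI i)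
          else (if cl i then dlsI mup x l dxI i else dlC mup x l i)).

(* Main.v *)
Require Import Defs.
From mathcomp Require Import all_boot all_order all_algebra.
From mathcomp Require Import all_classical all_reals all_analysis.
From mathcomp Require Import lra ring.
Import Order.TTheory GRing.Theory Num.Theory.
Local Open Scope ring_scope.

Section Helpers.
Context {R : realType}.

Definition S1 {m : nat} (v : 'cV[R]_m) : R := \sum_i `|v i 0|.

Lemma S1_ge0 {m} (v : 'cV[R]_m) : 0 <= S1 v.
Proof. by apply: sumr_ge0 => i _. Qed.

Lemma abs_le_S1 {m} (v : 'cV[R]_m) i : `|v i 0| <= S1 v.
Proof.
rewrite /S1 (bigD1 i) //= lerDl; by apply: sumr_ge0 => j _.
Qed.

Lemma enorm_le_S1 {m} (v : 'cV[R]_m) : enorm v <= S1 v.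
Proof.
rewrite /enorm -(ger0_norm (S1_ge0 v)) -sqrtr_sqr ler_wsqrtr //.
rewrite expr2 /S1 mulr_suml; apply: ler_sum => i _.
rewrite -real_normK ?num_real // expr2.
by apply: ler_wpM2l => //; exact: (abs_le_S1 v i).
Qed.

Lemma abs_le_enorm {m} (v : 'cV[R]_m) i : `|v i 0| <= enorm v.
Proof.
rewrite /enorm -sqrtr_sqr ler_wsqrtr //.
rewrite (bigD1 i) //= lerDl; apply: sumr_ge0 => j _; exact: sqr_ge0.
Qed.

Lemma S1_le_enorm {m} (v : 'cV[R]_m) : S1 v <= m%:R * enorm v.
Proof.
rewrite /S1; apply: (le_trans (ler_sum _ (fun i _ => abs_le_enorm v i))).
by rewrite sumr_const card_ord mulr_natl.
Qed.

Lemma S1_bound {m} (v : 'cV[R]_m) b : (forall i, `|v i 0| <= b) -> S1 v <= m%:R * b.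
Proof.
move=> H; rewrite /S1; apply: (le_trans (ler_sum _ (fun i _ => H i))).
by rewrite sumr_const card_ord mulr_natl.
Qed.

Lemma S1_col {m1 m2} (a : 'cV[R]_m1) (b : 'cV[R]_m2) : S1 (col_mx a b) = S1 a + S1 b.
Proof.
by rewrite /S1 big_split_ord /=; congr (_ + _); apply: eq_bigr => i _;
  rewrite ?col_mxEu ?col_mxEd.
Qed.

End Helpers.

Section H2.
Context {R : realType}.

Lemma inj_unitmx {n} (K : 'M[R]_n) :
  (forall v : 'cV[R]_n, K *m v = 0 -> v = 0) -> K \in unitmx.
Proof.
move=> H; rewrite -unitmx_tr -row_free_unit -kermx_eq0; apply/eqP.
apply/row_matrixP => i; rewrite row0.
have h1 : row i (kermx K^T) *m K^T = 0 by rewrite -row_mul mulmx_ker row0.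
have h2 : K *m (row i (kermx K^T))^T = 0.
  by move: (congr1 trmx h1); rewrite trmx_mul trmxK trmx0.
by rewrite -[row i _]trmxK (H _ h2) trmx0.
Qed.

Lemma Fprime_mul {n} (Hf : 'cV[R]_n -> 'M[R]_n) (x l a b : 'cV[R]_n) :
  Fprime Hf x l *m col_mx a b =
  col_mx (Hf x *m a - b) (\col_i (l i 0 * a i 0 + x i 0 * b i 0)).
Proof.
rewrite /Fprime mul_block_col mulNmx mul1mx; congr col_mx.
rewrite !mul_diag_mx; apply/matrixP => i j; rewrite !mxE.
by rewrite (ord1 j).
Qed.

Lemma Hv_bound {n} (H : 'M[R]_n) (v : 'cV[R]_n) Hb i :
  (forall i j, `|H i j| <= Hb) -> `|(H *m v) i 0| <= Hb * \sum_j `|v j 0|.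
Proof.
move=> hH; rewrite mxE mulr_sumr; apply: (le_trans (ler_norm_sum _ _ _)).
apply: ler_sum => j _; rewrite normrM; apply: ler_wpM2r => //.
Qed.

Lemma sum_add_le {n} (u v : 'cV[R]_n) :
  \sum_i `|(u + v) i 0| <= \sum_i `|u i 0| + \sum_i `|v i 0|.
Proof. rewrite -big_split /=; apply: ler_sum => i _; rewrite mxE; exact: ler_normD. Qed.

End H2.

Section H3.
Context {R : realType}.

Definition Kmat {n} (xs : 'cV[R]_n) (H : 'M[R]_n) (x l : 'cV[R]_n) : 'M[R]_n :=
  \matrix_(i, j) (if isA xs i then (i == j)%:R
     else (if isA xs j then 0 else H i j) + (i == j)%:R * (l i 0 / x i 0)).

Lemma Kmat_entry {n} (xs : 'cV[R]_n) (H : 'M[R]_n) (x l v : 'cV[R]_n) i :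
  (Kmat xs H x l *m v) i 0 = if isA xs i then v i 0 else
    \sum_j (if isA xs j then 0 else H i j) * v j 0 + l i 0 / x i 0 * v i 0.
Proof.
rewrite mxE /Kmat; case: ifP => hi.
  rewrite (bigD1 i) //= big1 ?addr0; first by rewrite mxE hi eqxx mul1r.
  by move=> j /negbTE hj; rewrite mxE hi eq_sym hj mul0r.
under eq_bigr => j _ do rewrite mxE hi mulrDl.
rewrite big_split /=; congr (_ + _).
rewrite (bigD1 i) //= big1 ?addr0; first by rewrite eqxx mul1r.
by move=> j /negbTE hj; rewrite eq_sym hj mul0r mul0r.
Qed.

Lemma sum_suppI {n} (xs : 'cV[R]_n) (H : 'M[R]_n) (v : 'cV[R]_n) i :
  (forall j, isA xs j -> v j 0 = 0) ->
  \sum_j (if isA xs j then 0 else H i j) * v j 0 = (H *m v) i 0.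
Proof.
move=> hv; rewrite mxE; apply: eq_bigr => j _.
by case: ifP => hj; rewrite ?(hv j hj) ?mulr0 ?mul0r.
Qed.

Lemma ls_sol_K {n} (xs : 'cV[R]_n) (g : 'cV[R]_n -> 'cV[R]_n) (Hf : 'cV[R]_n -> 'M[R]_n) mup (x l dxA d : 'cV[R]_n) :
  ls_sol xs g Hf mup x l dxA d <->
  Kmat xs (Hf x) x l *m d =
  \col_i (if isA xs i then 0 else - (g x i 0 + (Hf x *m dxA) i 0) + mup / x i 0).
Proof.
split.
  move=> [h1 h2]; apply/matrixP => i j; rewrite (ord1 j) Kmat_entry mxE.
  case: ifP => hi; first exact: h1.
  by rewrite sum_suppI // h2 // hi.
move=> hK.
have h1 : forall i, isA xs i -> d i 0 = 0.
  by move=> i hi; have := (matrixP _ _).2 hK i 0; rewrite Kmat_entry mxE hi.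
split => // i /negbTE hi.
by have := (matrixP _ _).2 hK i 0; rewrite Kmat_entry mxE hi sum_suppI.
Qed.

End H3.

Section H4.
Context {R : realType}.

Lemma S1_col_bound {n} (a c : 'cV[R]_n) b :
  (forall i, `|a i 0| <= b) -> (forall i, `|c i 0| <= b) ->
  S1 (col_mx a c) <= (n + n)%:R * b.
Proof.
move=> ha hc; rewrite S1_col natrD mulrDl.
by apply: lerD; apply: S1_bound.
Qed.

Lemma S1_eq0 {n} (v : 'cV[R]_n) : S1 v <= 0 -> v = 0.
Proof.
move=> h; apply/matrixP => i j; rewrite (ord1 j) mxE.
apply/eqP; rewrite -normr_eq0 eq_le normr_ge0 andbT.
exact: le_trans (abs_le_S1 v i) h.
Qed.

Lemma mxaddE {m} (A B : 'cV[R]_m) i : (A + B) i 0 = A i 0 + B i 0.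
Proof. by rewrite !mxE. Qed.
Lemma mxoppE {m} (A : 'cV[R]_m) i : (- A) i 0 = - A i 0.
Proof. by rewrite !mxE. Qed.
Lemma mxsubE {m} (A B : 'cV[R]_m) i : (A - B) i 0 = A i 0 - B i 0.
Proof. by rewrite !mxE. Qed.
Lemma colE {m} (F : 'I_m -> R) i : (\col_j F j) i 0 = F i.
Proof. by rewrite !mxE. Qed.

Lemma frac1 (y r : R) : 0 <= y -> `|y * r / (1 + y ^+ 2)| <= `|r|.
Proof.
move=> hy; have hp : 0 < 1 + y ^+ 2 by have h : 0 <= y ^+ 2 := sqr_ge0 y; lra.
rewrite normrM normfV (gtr0_norm hp) normrM (ger0_norm hy) ler_pdivrMr //.
have h1 : 0 <= `|r| := normr_ge0 r.
have h3 : y <= 1 + y ^+ 2.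
  have h4 : 0 <= (y - 1) ^+ 2 := sqr_ge0 _.
  have h5 : 0 <= y ^+ 2 := sqr_ge0 _.
  nra.
by rewrite [y * _]mulrC; apply: ler_wpM2l.
Qed.

Lemma frac2 (y r : R) : `|r / (1 + y ^+ 2)| <= `|r|.
Proof.
have hp : 0 < 1 + y ^+ 2 by have h : 0 <= y ^+ 2 := sqr_ge0 y; lra.
rewrite normrM normfV (gtr0_norm hp) ler_pdivrMr //.
rewrite -{1}[`|r|]mulr1; apply: ler_wpM2l => //.
have h2 : 0 <= y ^+ 2 := sqr_ge0 y; lra.
Qed.

End H4.

Section Core.
Context {R : realType}.

Lemma core {n} (g : 'cV[R]_n -> 'cV[R]_n) (Hf : 'cV[R]_n -> 'M[R]_n) (xs x l : 'cV[R]_n)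
  (mu sigma C1 s a Hb Mq : R)
  (hmu : 0 < mu) (hsig : 0 < sigma < 1) (hC1 : 0 < C1) (hs : 0 < s) (ha : 0 <= a)
  (hHb : 0 <= Hb) (hMq : 0 <= Mq)
  (hx : forall i, 0 < x i 0) (hl : forall i, 0 < l i 0)
  (hunit : Fprime Hf x l \in unitmx)
  (hM : forall w, S1 (invmx (Fprime Hf x l) *m w) <= Mq * S1 w)
  (hF : forall k, `|Fmu g mu x l k 0| <= C1 * mu)
  (hA : forall i, isA xs i -> x i 0 <= a * mu /\ s / 2 <= l i 0)
  (hI : forall i, ~~ isA xs i -> l i 0 <= a * mu /\ s / 2 <= x i 0)
  (hH : forall i j, `|Hf x i j| <= Hb)
  (hsm1 : a * mu * Hb <= s / 4)
  (hsm2 : Mq * (n + n)%:R * (a * (2 / s + 1 + 2 * Hb + C1)) * mu <= 1 / 2) :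
  let mup := sigma * mu in
  (forall i, isA xs i -> x i 0 * Hf x i i + l i 0 != 0) /\
  forall cx cl : 'I_n -> bool,
    let dxA := dxA_of xs g Hf mup x l cx in
    (exists dxI, ls_sol xs g Hf mup x l dxA dxI) /\
    (forall d1 d2, ls_sol xs g Hf mup x l dxA d1 ->
                   ls_sol xs g Hf mup x l dxA d2 -> d1 = d2) /\
    (forall dxI, ls_sol xs g Hf mup x l dxA dxI ->
       enorm (col_mx (dxA + dxI) (dlam_of xs g Hf mup x l dxA dxI cl)
              - newton_dir g Hf mup x l)
       <= (2 * (Mq * (n + n)%:R * (a * (2 / s + 1 + 2 * Hb + C1))) *
           (Mq * (n + n)%:R * (C1 + 1) + 1) + 1) * mu ^+ 2).
Proof.
move=> mup.
set N := (n + n)%:R.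
set ka := a * (2 / s + 1 + 2 * Hb + C1).
have hN : 0 <= N by [].
have hka : 0 <= ka.
  apply: mulr_ge0 => //; have : 0 <= 2 / s by rewrite divr_ge0 // ltW.
  lra.
have hFt : forall i, `|g x i 0 - l i 0| <= C1 * mu.
  by move=> i; have := hF (lshift n i); rewrite /Fmu col_mxEu !mxE.
have hFb : forall i, `|l i 0 * x i 0 - mu| <= C1 * mu.
  by move=> i; have := hF (rshift n i); rewrite /Fmu col_mxEd !mxE.
have hxA : forall i, isA xs i -> `|x i 0 * Hf x i i| <= s / 4.
  move=> i hi; rewrite normrM (gtr0_norm (hx i)).
  have [h1 _] := hA i hi.
  apply: le_trans hsm1; apply: ler_pM => //; exact: ltW.
have hden : forall i, isA xs i -> x i 0 * Hf x i i + l i 0 != 0.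
  move=> i hi; have [_ h2] := hA i hi; have := hxA i hi.
  rewrite ler_norml => /andP [h3 _]; apply/negbT/gt_eqF; lra.
split; first exact: hden.
move=> cx cl dxA.
set F' := Fprime Hf x l.
set K := Kmat xs (Hf x) x l.
have hdxA_I : forall i, ~~ isA xs i -> dxA i 0 = 0.
  by move=> i hi; rewrite /dxA /dxA_of mxE (negbTE hi).
have e1 : a * Hb <= ka.
  rewrite /ka; apply: ler_wpM2l => //; have : 0 <= 2 / s by rewrite divr_ge0 // ltW.
  lra.
have e2 : Mq * N * (a * Hb) * mu <= 1 / 2.
  apply: le_trans hsm2; apply: ler_wpM2r; first exact: ltW.
  by apply: ler_wpM2l => //; apply: mulr_ge0.
have hinj : forall v : 'cV[R]_n, K *m v = 0 -> v = 0.
  move=> v hv.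
  have hvA : forall i, isA xs i -> v i 0 = 0.
    by move=> i hi; have := (matrixP _ _).2 hv i 0; rewrite Kmat_entry hi mxE.
  have hvI : forall i, ~~ isA xs i -> (Hf x *m v) i 0 + l i 0 / x i 0 * v i 0 = 0.
    move=> i /negbTE hi; have := (matrixP _ _).2 hv i 0.
    by rewrite Kmat_entry hi mxE sum_suppI.
  set w := \col_i (if isA xs i then (Hf x *m v) i 0 else - (l i 0 / x i 0 * v i 0)).
  set z := F' *m col_mx v w.
  have hS0 : 0 <= a * mu * Hb * S1 v.
    by rewrite !mulr_ge0 ?S1_ge0 // ltW.
  have hz : S1 z <= N * (a * mu * Hb * S1 v).
    rewrite /z /F' Fprime_mul; apply: S1_col_bound => i.
      rewrite [X in `|X|]mxE [X in _ + X]mxE [w i 0]mxE.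
      case: ifP => hi; first by rewrite subrr normr0.
      by rewrite opprK hvI ?hi // normr0.
    rewrite mxE [w i 0]mxE.
    case: ifP => hi; first rewrite hvA // mulr0 add0r normrM (gtr0_norm (hx i)).
      rewrite -mulrA; apply: ler_pM => //; first exact: ltW.
        by have [] := hA i hi.
      exact: Hv_bound.
    have hx0 : x i 0 != 0 by apply/negbT/gt_eqF.
    by rewrite (_ : _ + _ = 0) ?normr0 //; field.
  have hcol : col_mx v w = invmx F' *m z by rewrite /z mulKmx.
  have h1 : S1 v <= Mq * (N * (a * mu * Hb * S1 v)).
    apply: (@le_trans _ _ (S1 (col_mx v w))); first by rewrite S1_col lerDl S1_ge0.
    rewrite hcol; apply: le_trans (hM z) _; exact: ler_wpM2l.
  have h2 : Mq * (N * (a * mu * Hb * S1 v)) <= 1 / 2 * S1 v.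
    rewrite (_ : Mq * (N * (a * mu * Hb * S1 v)) = (Mq * N * (a * Hb) * mu) * S1 v);
      last by ring.
    by apply: ler_wpM2r => //; exact: S1_ge0.
  apply: S1_eq0; have := S1_ge0 v; lra.
have hKu : K \in unitmx by exact: inj_unitmx.
split.
  exists (invmx K *m \col_i (if isA xs i then 0 else
           - (g x i 0 + (Hf x *m dxA) i 0) + mup / x i 0)).
  by apply/ls_sol_K; rewrite mulKVmx.
split.
  move=> d1 d2 /ls_sol_K h1 /ls_sol_K h2; apply/eqP; rewrite -subr_eq0; apply/eqP.
  by apply: hinj; rewrite mulmxBr -/K h1 h2 subrr.
move=> dxI hls; have [hIA hIeq] := hls.
set dx := dxA + dxI.
set dl := dlam_of xs g Hf mup x l dxA dxI cl.
set dt := col_mx dx dl.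
set d := newton_dir g Hf mup x l.
set r := F' *m dt + Fmu g mup x l.
set D := S1 dx.
have hD : 0 <= D by exact: S1_ge0.
set B := ka * mu * (D + mu).
have hB : 0 <= B.
  by rewrite /B; apply: mulr_ge0; [apply: mulr_ge0 => //; exact: ltW | lra].
have hdxe : forall i, dx i 0 = dxA i 0 + dxI i 0 by move=> i; rewrite /dx mxaddE.
have hHdx : forall i, (Hf x *m dx) i 0 = (Hf x *m dxA) i 0 + (Hf x *m dxI) i 0.
  by move=> i; rewrite /dx mulmxDr mxaddE.
have hHD : forall i, `|(Hf x *m dx) i 0| <= Hb * D by move=> i; exact: Hv_bound.
have hdxD : forall i, `|dx i 0| <= D by move=> i; exact: abs_le_S1.
set s2 := 2 / s.
have hs2 : 0 <= s2 by rewrite /s2 divr_ge0 // ltW.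
have hs2s : s2 * (s / 2) = 1 by rewrite /s2; field; apply/negbT/gt_eqF.
have hamu : 0 <= a * mu by rewrite mulr_ge0 // ltW.
have hfin : forall t, t <= (s2 + 1 + 2 * Hb + C1) * (D + mu) -> a * mu * t <= B.
  move=> t ht; rewrite /B /ka -/s2.
  rewrite (_ : a * (s2 + 1 + 2 * Hb + C1) * mu * (D + mu) =
               a * mu * ((s2 + 1 + 2 * Hb + C1) * (D + mu))); last by ring.
  exact: ler_wpM2l.
have hboth : forall i,
    `|(Hf x *m dx) i 0 - dl i 0 + (g x i 0 - l i 0)| <= B /\
    `|l i 0 * dx i 0 + x i 0 * dl i 0 + (l i 0 * x i 0 - mup)| <= B.
  move=> i; have hx0 : x i 0 != 0 by apply/negbT/gt_eqF.
  have hl0 : l i 0 != 0 by apply/negbT/gt_eqF.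
  have hKD : D <= (s2 + 1 + 2 * Hb + C1) * (D + mu) by nra.
  have hKD2 : s2 * D <= (s2 + 1 + 2 * Hb + C1) * (D + mu) by nra.
  have hKD3 : C1 * mu + 2 * Hb * D <= (s2 + 1 + 2 * Hb + C1) * (D + mu) by nra.
  case hi: (isA xs i).
    have hI0 := hIA i hi.
    have hdx : dx i 0 = dxA i 0 by rewrite hdxe hI0 addr0.
    have hdl : dl i 0 = if cl i then dlsA g Hf mup x l dxA dxI i
                        else dlb g Hf x l dxA dxI i by rewrite /dl /dlam_of mxE hi.
    have hb : dlb g Hf x l dxA dxI i = g x i 0 - l i 0 + (Hf x *m dx) i 0.
      by rewrite /dlb hHdx; ring.
    set r2 := l i 0 * dx i 0 + x i 0 * (g x i 0 - l i 0 + (Hf x *m dx) i 0)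
              + (l i 0 * x i 0 - mup).
    have [hxa hls2] := hA i hi.
    have hxi0 : 0 <= x i 0 by exact: ltW.
    have hr2 : `|r2| <= a * mu * (C1 * mu + 2 * Hb * D).
      have hdA : dxA i 0 = if cx i then dxS g Hf mup x l i else dxC mup x l i.
        by rewrite /dxA /dxA_of mxE hi.
      move: hdA; case: (cx i) => hdA; rewrite /dxS /dxC in hdA.
        have hd0 := hden i hi.
        rewrite /r2 (_ : _ + _ = x i 0 * ((Hf x *m dx) i 0 - Hf x i i * dx i 0));
          last by rewrite hdx hdA; field.
        rewrite normrM (ger0_norm hxi0); apply: ler_pM => //.
        apply: le_trans (ler_normB _ _) _; rewrite normrM.
        have h1 := hHD i; have h2 := hdxD i; have h3 := hH i i.
        have h4 : `|Hf x i i| * `|dx i 0| <= Hb * D by apply: ler_pM.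
        have h5 : 0 <= Hb * D by apply: mulr_ge0.
        have h6 : 0 <= C1 * mu by apply: mulr_ge0; exact: ltW.
        lra.
      rewrite /r2 (_ : _ + _ = x i 0 * (g x i 0 - l i 0) + x i 0 * (Hf x *m dx) i 0);
        last by rewrite hdx hdA; field.
      rewrite -mulrDr normrM (ger0_norm hxi0); apply: ler_pM => //.
      apply: le_trans (ler_normD _ _) _.
      have h1 := hHD i; have h2 := hFt i; have h5 : 0 <= Hb * D by apply: mulr_ge0.
      lra.
    have hr2B : `|r2| <= B by apply: le_trans hr2 _; exact: hfin.
    have hp : 1 + x i 0 ^+ 2 != 0.
      by apply/negbT/gt_eqF; have h : 0 <= x i 0 ^+ 2 := sqr_ge0 _; lra.
    rewrite hdl; case: (cl i).
      rewrite /dlsA hb.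
      split.
        rewrite (_ : _ + _ = x i 0 * r2 / (1 + x i 0 ^+ 2)).
          by apply: le_trans hr2B; exact: frac1.
        by rewrite /r2 hdx; field.
      rewrite (_ : _ + _ = r2 / (1 + x i 0 ^+ 2)).
        by apply: le_trans hr2B; exact: frac2.
      by rewrite /r2 hdx; field.
    rewrite hb; split.
      by rewrite (_ : _ + _ = 0) ?normr0 //; ring.
    by rewrite /r2 in hr2B.
  have hA0 : dxA i 0 = 0 by rewrite hdxA_I ?hi.
  have hdx : dx i 0 = dxI i 0 by rewrite hdxe hA0 add0r.
  have eqI := hIeq i (negbT hi).
  have hdl : dl i 0 = if cl i then dlsI mup x l dxI i else dlC mup x l i.
    by rewrite /dl /dlam_of mxE hi.
  have [hl1 hx1] := hI i (negbT hi).
  have hlx : l i 0 / x i 0 <= a * mu * s2.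
    rewrite ler_pdivrMr //.
    apply: le_trans hl1 _; rewrite -{1}[a * mu]mulr1 -hs2s mulrA.
    by apply: ler_wpM2l => //; apply: mulr_ge0.
  have hlx0 : 0 <= l i 0 / x i 0 by rewrite divr_ge0 // ltW.
  have hb1 : `|l i 0 / x i 0 * dxI i 0| <= B.
    apply: le_trans (hfin _ hKD2); rewrite normrM (ger0_norm hlx0) mulrA.
    by apply: ler_pM => //; rewrite -hdx.
  have hb2 : `|l i 0 * dxI i 0| <= B.
    apply: le_trans (hfin _ hKD); rewrite normrM (gtr0_norm (hl i)).
    apply: ler_pM => //; [exact: ltW | by rewrite -hdx].
  rewrite hHdx hdl hdx; case: (cl i); rewrite /dlsI /dlC.
    split.
      by rewrite (_ : _ + _ = 0) ?normr0 //; lra.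
    by rewrite (_ : _ + _ = 0) ?normr0 //; field.
  split.
    have -> : (Hf x *m dxA) i 0 + (Hf x *m dxI) i 0 - (- l i 0 + mup / x i 0)
              + (g x i 0 - l i 0) = - (l i 0 / x i 0 * dxI i 0) by lra.
    by rewrite normrN.
  by rewrite (_ : _ + _ = l i 0 * dxI i 0) //; field.
have htop : forall i, `|(Hf x *m dx) i 0 - dl i 0 + (g x i 0 - l i 0)| <= B.
  by move=> i; case: (hboth i).
have hbot : forall i,
    `|l i 0 * dx i 0 + x i 0 * dl i 0 + (l i 0 * x i 0 - mup)| <= B.
  by move=> i; case: (hboth i).
have hSr : S1 r <= N * B.
  rewrite /r /F' /dt Fprime_mul /Fmu add_col_mx; apply: S1_col_bound => i;
    rewrite ?mxaddE.
    rewrite !mxoppE; exact: htop.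
  rewrite mxE [X in _ + X]mxE; exact: hbot.
have hSF : S1 (- Fmu g mup x l) <= N * ((C1 + 1) * mu).
  rewrite /Fmu opp_col_mx; apply: S1_col_bound => i;
    rewrite ?mxoppE ?mxsubE ?colE normrN.
    by apply: le_trans (hFt i) _; rewrite ler_wpM2r ?lerDl // ltW.
rewrite ?mxE.   rewrite (_ : _ - _ = (l i 0 * x i 0 - mu) + (1 - sigma) * mu); last by rewrite /mup; ring.
  apply: le_trans (ler_normD _ _) _.
  rewrite (ger0_norm (_ : 0 <= (1 - sigma) * mu)); last by apply: mulr_ge0; lra.
  have := hFb i; nra.
have hdiff : dt - d = invmx F' *m r.
  by rewrite /r /d /newton_dir -/F' mulmxDr mulKmx // mulmxN opprK.
set e := S1 (dt - d).
have he0 : 0 <= e by exact: S1_ge0.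
have he : e <= Mq * (N * B) by rewrite /e hdiff; apply: le_trans (hM r) _; exact: ler_wpM2l.
have hSd : S1 d <= Mq * (N * ((C1 + 1) * mu)).
  by apply: le_trans (hM _) _; exact: ler_wpM2l.
have hDe : D <= S1 d + e.
  apply: (@le_trans _ _ (S1 dt)); first by rewrite /dt S1_col lerDl S1_ge0.
  rewrite {1}(_ : dt = d + (dt - d)); last by rewrite addrC subrK.
  exact: sum_add_le.
set P := Mq * N * ka.
set Q := Mq * N * (C1 + 1) + 1.
have hP : 0 <= P by rewrite /P; apply: mulr_ge0 => //; apply: mulr_ge0.
have hPmu : P * mu <= 1 / 2 by [].
have he2 : e <= (P * mu) * (Q * mu + e).
  apply: le_trans he _.
  rewrite (_ : Mq * (N * B) = (P * mu) * (D + mu)); last by rewrite /B /P; ring.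
  apply: ler_wpM2l; first by rewrite mulr_ge0 // ltW.
  have : S1 d + mu <= Q * mu.
    by rewrite /Q mulrDl mul1r lerD2r (le_trans hSd) // mulrA mulrA.
  lra.
apply: (@le_trans _ _ e); first by rewrite /e; exact: enorm_le_S1.
have hQ : 0 <= Q by rewrite /Q addr_ge0 // !mulr_ge0 // addr_ge0 // ltW.
set u := P * mu in he2 hPmu; set v := Q * mu in he2.
have hu : 0 <= u by rewrite /u mulr_ge0 // ltW.
have hv : 0 <= v by rewrite /v mulr_ge0 // ltW.
have : e <= 2 * u * v by nra.
move=> h; apply: le_trans h _; rewrite /u /v -/P -/Q; nra.
Qed.
End Core.

Section Main.
Context {R : realType}.

Lemma pos_lb {n} (F : 'I_n -> R) : (forall i, 0 < F i) ->
  exists s : R, 0 < s /\ forall i, s <= F i.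
Proof.
move=> hF; set S := 1 + \sum_i (F i)^-1.
have hS0 : 0 <= \sum_i (F i)^-1 by apply: sumr_ge0 => i _; rewrite invr_ge0 ltW.
have hS : 0 < S by rewrite /S; lra.
exists S^-1; split; first by rewrite invr_gt0.
move=> i; rewrite -[F i]invrK lef_pV2 ?posrE ?invr_gt0 //.
rewrite /S (bigD1 i) //=; have : 0 <= \sum_(j | j != i) (F j)^-1.
  by apply: sumr_ge0 => j _; rewrite invr_ge0 ltW.
lra.
Qed.

Lemma H_bound {n} (Hf : 'cV[R]_n -> 'M[R]_n) (xs : 'cV[R]_n) r0 L :
  0 < r0 ->
  (forall y z : 'cV[R]_n, enorm (y - xs) < r0 -> enorm (z - xs) < r0 ->
      forall w : 'cV[R]_n, enorm ((Hf y - Hf z) *m w) <= L * enorm (y - z) * enorm w) ->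
  forall y, enorm (y - xs) < r0 -> forall i j,
    `|Hf y i j| <= \sum_i \sum_j `|Hf xs i j| + `|L| * r0.
Proof.
move=> hr0 hL y hy i j.
set w : 'cV[R]_n := \col_k (k == j)%:R.
have hw : enorm w = 1.
  rewrite /enorm (bigD1 j) //= big1 ?addr0; first by rewrite /w mxE eqxx expr1n sqrtr1.
  by move=> k /negbTE hk; rewrite /w mxE hk expr0n.
have hAw : ((Hf y - Hf xs) *m w) i 0 = (Hf y - Hf xs) i j.
  rewrite mxE (bigD1 j) //= big1 ?addr0; first by rewrite /w [X in _ * X]mxE eqxx mulr1.
  by move=> k /negbTE hk; rewrite /w [X in _ * X]mxE hk mulr0.
have h0 : enorm (xs - xs) < r0 by rewrite subrr /enorm big1 ?sqrtr0 // => k _; rewrite mxE expr0n.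
have := hL y xs hy h0 w; rewrite hw mulr1 => hb.
have h1 := abs_le_enorm ((Hf y - Hf xs) *m w) i; rewrite hAw in h1.
have h2 : `|Hf xs i j| <= \sum_i \sum_j `|Hf xs i j|.
  rewrite (bigD1 i) //= (bigD1 j) //= -addrA lerDl.
  apply: addr_ge0; apply: sumr_ge0 => k _ //; apply: sumr_ge0 => k' _ //.
have h3 : L * enorm (y - xs) <= `|L| * r0.
  have he : 0 <= enorm (y - xs) by rewrite /enorm sqrtr_ge0.
  apply: le_trans (_ : `|L| * enorm (y - xs) <= _).
    by apply: ler_wpM2r => //; rewrite ler_norm.
  by apply: ler_wpM2l => //; exact: ltW.
have h4 : `|Hf y i j| <= `|Hf xs i j| + `|(Hf y - Hf xs) i j|.
  rewrite (_ : Hf y i j = Hf xs i j + (Hf y - Hf xs) i j); last by rewrite !mxE; ring.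
  exact: ler_normD.
lra.
Qed.

End Main.

Theorem theorem1 (R : realType) (n : nat)
  (f : 'cV[R]_n -> R) (g : 'cV[R]_n -> 'cV[R]_n) (Hf : 'cV[R]_n -> 'M[R]_n)
  (* g is the gradient and Hf the Hessian of f (directional derivatives) *)
  (hg : forall (x v : 'cV[R]_n),
      is_derive (0 : R) (1 : R) (fun t : R => f (x + t *: v)) (((g x)^T *m v) 0 0))
  (hH : forall (x v : 'cV[R]_n) (i : 'I_n),
      is_derive (0 : R) (1 : R) (fun t : R => g (x + t *: v) i 0) ((Hf x *m v) i 0))
  (* locally Lipschitz Hessian *)
  (hLip : forall x : 'cV[R]_n, exists r : R, 0 < r /\ exists L : R,
      forall y z : 'cV[R]_n, enorm (y - x) < r -> enorm (z - x) < r ->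
      forall w : 'cV[R]_n, enorm ((Hf y - Hf z) *m w) <= L * enorm (y - z) * enorm w)
  (xs ls : 'cV[R]_n)
  (hKKT : g xs = ls)
  (hxs : forall i, 0 <= xs i 0) (hls : forall i, 0 <= ls i 0)
  (hcomp : forall i, xs i 0 * ls i 0 = 0)
  (hstrict : forall i, 0 < xs i 0 + ls i 0)
  (hpd : forall v : 'cV[R]_n, (forall i, isA xs i -> v i 0 = 0) -> v != 0 ->
      0 < (v^T *m Hf xs *m v) 0 0)
  (delta M : R) (hdelta : 0 < delta)
  (hF' : forall x l : 'cV[R]_n, enorm (col_mx x l - col_mx xs ls) < delta ->
      Fprime Hf x l \in unitmx /\
      forall w : 'cV[R]_(n + n), enorm (invmx (Fprime Hf x l) *m w) <= M * enorm w)
  (muhat C4 : R) (xmu lmu : R -> 'cV[R]_n) (hmuhat : 0 < muhat)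
  (htraj : forall mu : R, 0 < mu <= muhat ->
      enorm (col_mx (xmu mu) (lmu mu) - col_mx xs ls) < delta /\
      Fmu g mu (xmu mu) (lmu mu) = 0 /\
      enorm (col_mx (xmu mu) (lmu mu) - col_mx xs ls) <= C4 * mu)
  (htrajLip : exists L : R, forall mu1 mu2 : R, 0 < mu1 <= muhat -> 0 < mu2 <= muhat ->
      enorm (col_mx (xmu mu1) (lmu mu1) - col_mx (xmu mu2) (lmu mu2))
        <= L * `|mu1 - mu2|)
  (sigma C1 : R) (hsigma : 0 < sigma < 1) (hC1 : 0 < C1) :
  exists rho mubar C : R, 0 < rho /\ 0 < mubar <= muhat /\ 0 < C /\
    forall (mu : R) (x l : 'cV[R]_n), 0 < mu <= mubar ->
      (forall i, 0 < x i 0) -> (forall i, 0 < l i 0) ->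
      enorm (col_mx x l - col_mx xs ls) < delta ->
      enorm (col_mx x l - col_mx (xmu mu) (lmu mu)) < rho ->
      enorm (Fmu g mu x l) <= C1 * mu ->
      let mup := sigma * mu in
      (forall i, isA xs i -> x i 0 * Hf x i i + l i 0 != 0) /\
      forall cx cl : 'I_n -> bool,
        let dxA := dxA_of xs g Hf mup x l cx in
        (exists dxI, ls_sol xs g Hf mup x l dxA dxI) /\
        (forall d1 d2, ls_sol xs g Hf mup x l dxA d1 ->
                       ls_sol xs g Hf mup x l dxA d2 -> d1 = d2) /\
        (forall dxI, ls_sol xs g Hf mup x l dxA dxI ->
           enorm (col_mx (dxA + dxI) (dlam_of xs g Hf mup x l dxA dxI cl)
                  - newton_dir g Hf mup x l) <= C * mu ^+ 2).
Proof.
have [r0 [hr0 [L hL]]] := hLip xs.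
set Hb := \sum_i \sum_j `|Hf xs i j| + `|L| * r0.
have hHb : 0 <= Hb.
  rewrite /Hb; apply: addr_ge0.
    by apply: sumr_ge0 => i _; apply: sumr_ge0.
  by apply: mulr_ge0 => //; exact: ltW.
have hHbd := @H_bound R n Hf xs r0 L hr0 hL.
have [s [hs hsle]] := pos_lb (fun i => xs i 0 + ls i 0) hstrict.
have hsA : forall i, isA xs i -> s <= ls i 0.
  by move=> i /eqP hi; have := hsle i; rewrite /= hi add0r.
have hsI : forall i, ~~ isA xs i -> s <= xs i 0.
  move=> i; rewrite /isA => /negbTE hi; have := hcomp i; move/eqP; rewrite mulf_eq0 hi /= => /eqP h0.
  by have := hsle i; rewrite /= h0 addr0.
set T : R := n%:R + 1.
have hT : 0 < T by rewrite /T; have : (0 : R) <= n%:R by []; lra.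
set C4p := `|C4|.
have hC4p : 0 <= C4p by exact: normr_ge0.
set a := 2 * (1 + C1) / s.
have ha : 0 <= a by rewrite /a divr_ge0 ?ltW //; lra.
set N : R := (n + n)%:R.
have hN : 0 <= N by [].
set Mq := N * `|M|.
have hMq : 0 <= Mq by rewrite /Mq; apply: mulr_ge0.
set ka := a * (2 / s + 1 + 2 * Hb + C1).
have hka : 0 <= ka.
  apply: mulr_ge0 => //; have : 0 <= 2 / s by rewrite divr_ge0 // ltW.
  lra.
set be := Mq * N * ka.
have hbe : 0 <= be by rewrite /be; apply: mulr_ge0 => //; apply: mulr_ge0.
have haHb : 0 <= a * Hb by apply: mulr_ge0.
exists (Order.min (s / 4) (r0 / (4 * T))),
  (Order.min muhat (Order.min (s / (4 * (C4p + 1))) (Order.min (r0 / (4 * T * (C4p + 1)))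
     (Order.min (s / (4 * (a * Hb + 1))) (1 / (2 * (be + 1))))))),
  (2 * be * (Mq * N * (C1 + 1) + 1) + 1).
split.
  by rewrite lt_min !divr_gt0 //; lra.
split.
  apply/andP; split; last by rewrite ge_min lexx.
  rewrite !lt_min hmuhat !divr_gt0 //; nra.
split.
  have : 0 <= 2 * be * (Mq * N * (C1 + 1) + 1).
    apply: mulr_ge0; first lra.
    have : 0 <= Mq * N * (C1 + 1) by apply: mulr_ge0; [apply: mulr_ge0 | lra].
    lra.
  lra.
move=> mu x l /andP [hmu hmub] hx hl hdel hrho hFn.
move: hmub; rewrite !le_min => /and5P [m1 m2 m3 m4 m5].
set rho := Order.min (s / 4) (r0 / (4 * T)) in hrho.
have hr1 : rho <= s / 4 by rewrite /rho ge_min lexx.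
have hr2 : rho <= r0 / (4 * T) by rewrite /rho ge_min lexx orbT.
have hmm : 0 < mu <= muhat by rewrite hmu m1.
have [_ [_ htr]] := htraj mu hmm.
have hC4mu : C4 * mu <= C4p * mu by apply: ler_wpM2r; [exact: ltW | exact: ler_norm].
have hC4s : C4p * mu <= s / 4.
  move: m2; rewrite ler_pdivlMr; last by lra.
  move=> m2; nra.
have hC4r : C4p * mu <= r0 / (4 * T).
  move: m3; rewrite ler_pdivlMr; last by nra.
  move=> m3; rewrite ler_pdivlMr; last by lra.
  have : 0 <= C4p * mu * (4 * T) by apply: mulr_ge0; [apply: mulr_ge0 => //; exact: ltW | lra].
  nra.
have hxd : forall i, `|x i 0 - xs i 0| <= rho + C4p * mu /\
                     `|l i 0 - ls i 0| <= rho + C4p * mu.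
  move=> i.
  have e1 := abs_le_enorm (col_mx x l - col_mx (xmu mu) (lmu mu)) (lshift n i).
  have e2 := abs_le_enorm (col_mx x l - col_mx (xmu mu) (lmu mu)) (rshift n i).
  have e3 := abs_le_enorm (col_mx (xmu mu) (lmu mu) - col_mx xs ls) (lshift n i).
  have e4 := abs_le_enorm (col_mx (xmu mu) (lmu mu) - col_mx xs ls) (rshift n i).
  rewrite !opp_col_mx !add_col_mx ?col_mxEu ?col_mxEd !mxaddE !mxoppE in e1 e2 e3 e4.
  rewrite !opp_col_mx !add_col_mx in hrho htr.
  split.
    rewrite (_ : x i 0 - xs i 0 = (x i 0 - xmu mu i 0) + (xmu mu i 0 - xs i 0)); last by ring.
    apply: le_trans (ler_normD _ _) _; lra.
  rewrite (_ : l i 0 - ls i 0 = (l i 0 - lmu mu i 0) + (lmu mu i 0 - ls i 0)); last by ring.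
  apply: le_trans (ler_normD _ _) _; lra.
have hFk : forall k, `|Fmu g mu x l k 0| <= C1 * mu.
  by move=> k; apply: le_trans (abs_le_enorm _ k) hFn.
have hFb : forall i, `|l i 0 * x i 0 - mu| <= C1 * mu.
  by move=> i; have := hFk (rshift n i); rewrite /Fmu col_mxEd !mxE.
have has : a * mu * (s / 2) = (1 + C1) * mu.
  by rewrite /a; field; apply/negbT/gt_eqF.
have hs2 : 0 < s / 2 by lra.
have hA : forall i, isA xs i -> x i 0 <= a * mu /\ s / 2 <= l i 0.
  move=> i hi; have [_ hl2] := hxd i; have h3 := hsA i hi.
  have hls2 : s / 2 <= l i 0.
    by move: hl2; rewrite ler_norml => /andP [h1 h2]; lra.
  split => //.
  rewrite -(ler_pM2r hs2) has.
  have := hFb i; rewrite ler_norml => /andP [_ h4].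
  have : x i 0 * (s / 2) <= l i 0 * x i 0.
    by rewrite mulrC; apply: ler_wpM2r => //; exact: ltW.
  lra.
have hI : forall i, ~~ isA xs i -> l i 0 <= a * mu /\ s / 2 <= x i 0.
  move=> i hi; have [hx2 _] := hxd i; have h3 := hsI i hi.
  have hxs2 : s / 2 <= x i 0.
    by move: hx2; rewrite ler_norml => /andP [h1 h2]; lra.
  split => //.
  rewrite -(ler_pM2r hs2) has.
  have := hFb i; rewrite ler_norml => /andP [_ h4].
  have : l i 0 * (s / 2) <= l i 0 * x i 0.
    by apply: ler_wpM2l => //; exact: ltW.
  lra.
have hxr : enorm (x - xs) < r0.
  apply: le_lt_trans (enorm_le_S1 _) _.
  apply: (@le_lt_trans _ _ (n%:R * (rho + C4p * mu))).
    by apply: S1_bound => i; rewrite mxaddE mxoppE; case: (hxd i).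
  have hrho0 : 0 < rho by rewrite /rho lt_min !divr_gt0 //; nra.
  have hcm : 0 <= C4p * mu by apply: mulr_ge0 => //; exact: ltW.
  have hd0 : 0 <= rho + C4p * mu by lra.
  have hTq : T * (r0 / (4 * T)) = r0 / 4 by field; apply/negbT/gt_eqF.
  have hnT : (n%:R : R) <= T by rewrite /T; lra.
  set q := r0 / (4 * T) in hr2 hC4r hTq.
  set d0 := rho + C4p * mu in hd0 *.
  have hd0q : d0 <= 2 * q by rewrite /d0; lra.
  nra.
have hH2 : forall i j, `|Hf x i j| <= Hb by move=> i j; exact: hHbd.
have [hunit hMb] := hF' x l hdel.
have hM2 : forall w, S1 (invmx (Fprime Hf x l) *m w) <= Mq * S1 w.
  move=> w; apply: le_trans (S1_le_enorm _) _.
  rewrite /Mq -mulrA; apply: ler_wpM2l => //.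
  apply: le_trans (hMb w) _.
  have he : 0 <= enorm w by rewrite /enorm sqrtr_ge0.
  apply: (@le_trans _ _ (`|M| * enorm w)).
    by apply: ler_wpM2r => //; exact: ler_norm.
  by apply: ler_wpM2l => //; exact: enorm_le_S1.
have hsm1 : a * mu * Hb <= s / 4.
  move: m4; rewrite ler_pdivlMr; last by lra.
  move=> m4; nra.
have hsm2 : be * mu <= 1 / 2.
  move: m5; rewrite ler_pdivlMr; last by lra.
  move=> m5; nra.
exact: (@core R n g Hf xs x l mu sigma C1 s a Hb Mq hmu hsigma hC1 hs ha hHb hMq
  hx hl hunit hM2 hFk hA hI hH2 hsm1 hsm2).
Qed.
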